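(* If $\sigma'$ is not lower bounded, the optimal policy cannot be identified from the transitions and the comparison probabilities; in particular, for the link function $\sigma(x)=\tfrac12(1+\mathrm{sign}(x))$ there exist an episodic MDP (with horizon $H=2$, known transitions) and two reward functions $r^{(1)},r^{(2)}$ such that $\sigma(r^{(1)}(\tau)-r^{(1)}(\tau'))=\sigma(r^{(2)}(\tau)-r^{(2)}(\tau'))$ for all pairs of trajectories $\tau,\tau'$, while the optimal policies with respect to $r^{(1)}$ and $r^{(2)}$ differ (each is suboptimal for the other reward).
   Context: Episodic MDP with trajectories $\tau$; a comparison oracle with link function $\sigma$ and reward $r$ returns $\tau\succ\tau'$ with probability $\sigma(r(\tau)-r(\tau'))$. A policy is optimal for $r$ if it maximizes $\mathbb{E}_{\tau\sim\pi}[r(\tau)]$. *)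

(* Defs.v *)
From HB Require Import structures.
From mathcomp Require Import all_boot all_order all_algebra.
Set Implicit Arguments. Unset Strict Implicit. Unset Printing Implicit Defensive.
Import Order.TTheory GRing.Theory Num.Theory.
Local Open Scope ring_scope.

Definition is_dist (R : numDomainType) (T : finType) (p : T -> R) : Prop :=
  (forall t, 0 <= p t) /\ \sum_(t : T) p t = 1.

(* Episodic MDP with horizon H = 2: state space, action space,
   initial-state distribution and (known) transition kernel from step 1 to 2. *)
Record mdp2 (R : numDomainType) := MDP2 {
  st : finType;
  ac : finType;
  init : st -> R;
  trans : st -> ac -> st -> R }.

Definition valid_mdp (R : numDomainType) (M : mdp2 R) : Prop :=
  is_dist (@init R M) /\ forall s a, is_dist (@trans R M s a).

Definition traj (R : numDomainType) (M : mdp2 R) : finType :=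
  (st M * ac M * st M * ac M)%type.

(* general (randomized, history-dependent) policy for horizon 2 *)
Record policy2 (R : numDomainType) (M : mdp2 R) := Policy2 {
  pol1 : st M -> ac M -> R;
  pol2 : st M -> ac M -> st M -> ac M -> R }.

Definition valid_policy (R : numDomainType) (M : mdp2 R) (pi : policy2 M) : Prop :=
  (forall s, is_dist (pol1 pi s)) /\
  (forall s a s', is_dist (pol2 pi s a s')).

Definition traj_prob (R : numDomainType) (M : mdp2 R) (pi : policy2 M)
  (tau : traj M) : R :=
  let: (s1, a1, s2, a2) := tau in
  @init R M s1 * pol1 pi s1 a1 * @trans R M s1 a1 s2 * pol2 pi s1 a1 s2 a2.

Definition value (R : numDomainType) (M : mdp2 R) (r : traj M -> R)
  (pi : policy2 M) : R :=
  \sum_(tau : traj M) traj_prob pi tau * r tau.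

Definition optimal (R : numDomainType) (M : mdp2 R) (r : traj M -> R)
  (pi : policy2 M) : Prop :=
  valid_policy pi /\
  forall pi' : policy2 M, valid_policy pi' -> value r pi' <= value r pi.

Definition sigma_sign (R : numFieldType) (x : R) : R :=
  2^-1 * (1 + Num.sg x).

(* Main.v *)
Require Import Defs.
From mathcomp Require Import all_boot all_order all_algebra.
From mathcomp Require Import ring lra.
Import Order.TTheory GRing.Theory Num.Theory.
Local Open Scope ring_scope.

Section S.
Context {R : realFieldType}.

Definition M0 : mdp2 R :=
  @MDP2 R bool bool (fun s => if s then 0 else 1)
    (fun s a s' => if a then 2^-1 else (if s' then 0 else 1)).

Definition rwd (h : R) : traj M0 -> R :=
  fun tau => let: (s1, a1, s2, a2) := tau in
    if a1 then (if s2 then h else 0) else 1.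

Lemma sum_bool (f : bool -> R) : \sum_(b : bool) f b = f true + f false.
Proof. by rewrite big_bool. Qed.

Lemma sum_pair (A B : finType) (F : A * B -> R) :
  \sum_(p : A * B) F p = \sum_(a : A) \sum_(b : B) F (a, b).
Proof. by rewrite pair_bigA; apply: eq_bigr => -[]. Qed.

Lemma val_eq (h : R) {q : policy2 M0} : valid_policy q ->
  value (rwd h) q = 1 + pol1 q false true * (h / 2 - 1).
Proof.
case=> [H1 H2].
have [_ e1] := H1 false.
have [_ e2] := H2 false false false.
have [_ e3] := H2 false true true.
have [_ e4] := H2 false true false.
rewrite !sum_bool in e1 e2 e3 e4.
rewrite /value /traj /= !sum_pair !sum_bool /=.
have -> : pol1 q false false = 1 - pol1 q false true by rewrite -e1; ring.
have -> : pol2 q false false false false = 1 - pol2 q false false false true by rewrite -e2; ring.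
have -> : pol2 q false true true false = 1 - pol2 q false true true true by rewrite -e3; ring.
by field.
Qed.

Definition pdet (b : bool) : policy2 M0 :=
  @Policy2 R M0 (fun _ a => if a == b then 1 else 0) (fun _ _ _ a => if a then 1 else 0).

Lemma pdet_valid b : valid_policy (pdet b).
Proof.
split=> *; split=> /=; rewrite ?sum_bool //; try (case: b=> //=; lra);
  move=> [] //=; case: b => //=; lra.
Qed.

Lemma p_bounds {q : policy2 M0} : valid_policy q ->
  0 <= pol1 q false true <= 1.
Proof.
case=> [H1 _]; have [p e] := H1 false; rewrite sum_bool in e.
have := p true; have := p false; lra.
Qed.

Lemma sg_eq (x y : R) : (0 < x <-> 0 < y) -> (x < 0 <-> y < 0) -> Num.sg x = Num.sg y.
Proof.
move=> [A B] [C D].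
have [xlt|xgt|x0] := ltrgtP x 0.
- by rewrite !ltr0_sg // C.
- by rewrite !gtr0_sg // A.
- have [ylt|ygt|->] := ltrgtP y 0.
  + by have := D ylt; rewrite x0 ltxx.
  + by have := B ygt; rewrite x0 ltxx.
  + by rewrite x0 sgr0.
Qed.

End S.

Theorem lemma2 (R : realFieldType) :
  exists (M : mdp2 R) (r1 r2 : traj M -> R),
    valid_mdp M /\
    (forall tau tau' : traj M,
        sigma_sign (r1 tau - r1 tau') = sigma_sign (r2 tau - r2 tau')) /\
    (exists pi, optimal r1 pi) /\
    (exists pi, optimal r2 pi) /\
    (forall pi, optimal r1 pi -> ~ optimal r2 pi) /\
    (forall pi, optimal r2 pi -> ~ optimal r1 pi).
Proof.
exists (M0 (R:=R)), (rwd (3:R)), (rwd (3/2:R)).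
have opt1 : forall pi, optimal (rwd (3:R)) pi -> pol1 pi false true = 1.
  move=> pi [v H]; have := H _ (pdet_valid true); rewrite !val_eq //; last exact: pdet_valid.
  rewrite /=; have := p_bounds v; lra.
have opt2 : forall pi, optimal (rwd (3/2:R)) pi -> pol1 pi false true = 0.
  move=> pi [v H]; have := H _ (pdet_valid false); rewrite !val_eq //; last exact: pdet_valid.
  rewrite /=; have := p_bounds v; lra.
split.
  split; first by split=> [[]|]; rewrite ?sum_bool //=; lra.
  by move=> s a; split=> [[]|]; case: a; rewrite ?sum_bool //=; lra.
split.
  move=> [[[s1 a1] s2] a2] [[[s1' a1'] s2'] a2']; rewrite /sigma_sign; congr (_ * (_ + _)).
  by case: a1 s2 a1' s2' => [] [] [] [] /=; apply: sg_eq; split=> ?; lra.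
split.
  exists (pdet (R:=R) true); split; first exact: pdet_valid.
  move=> pi v; rewrite !val_eq //; last exact: pdet_valid.
  rewrite /=; have := p_bounds v; lra.
split.
  exists (pdet (R:=R) false); split; first exact: pdet_valid.
  move=> pi v; rewrite !val_eq //; last exact: pdet_valid.
  rewrite /=; have := p_bounds v; lra.
split.
  by move=> pi h1 h2; have := opt1 _ h1; rewrite opt2 //; apply/eqP; rewrite eq_sym oner_eq0.
by move=> pi h2 h1; have := opt1 _ h1; rewrite opt2 //; apply/eqP; rewrite eq_sym oner_eq0.
Qed.
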